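(* Let $G$ be a simplicial group acting on a simplicial set $X$, let $g\in G_1$ be a loop, and let $\sigma\in X_n$. Then for any $0\le m\le n$ and $0\le k\le n+1$, \[ P^{n+1}_k\bigl(A^m_g(\sigma)\bigr)=\begin{cases}(-1)^k\,(1\otimes A^{m-k}_g)\,P^n_k(\sigma)&\text{if }k\le m,\\(A^m_g\otimes1)\,P^n_{k-1}(\sigma)&\text{if }k>m.\end{cases} \]
   Context: Chains are normalized. A loop is a $1$-simplex $g$ with $\partial_0g=\partial_1g=1_0$. For $I=\{i_1<\dots<i_r\}$ write $s_I=s_{i_r}\circ\dots\circ s_{i_1}$, and $[n]=\{0,\dots,n\}$. For a loop $g$ and $0\le m\le n$, $A^m_g\colon C_n(X)\to C_{n+1}(X)$ is $\sigma\mapsto(s_{[n]\setminus m}\,g)\cdot s_m\sigma$ (here $s_{[n]\setminus m}g$ means $s_I g$ for $I=[n]\setminus\{m\}$). For $0\le k\le n$, $P^n_k\colon C_n(X)\to C_k(X)\otimes C_{n-k}(X)$, $\sigma\mapsto\sigma(0,\dots,k)\otimes\sigma(k,\dots,n)$ (front and back faces); tensor products of maps follow the Koszul sign rule. *)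

(* Defs.v *)
From mathcomp Require Import all_boot all_order all_algebra.
From mathcomp Require Import boolp.
Set Implicit Arguments. Unset Strict Implicit. Unset Printing Implicit Defensive.
Import GRing.Theory Num.Theory.
Local Open Scope ring_scope.

(* Simplicial sets, presented as graded sets: the carrier is the disjoint    *)
(* union of all X_n, [sdim x] is the n with x in X_n, and face/degeneracy     *)
(* operators are given for every index; the axioms (simplicial identities)   *)
(* are only imposed for valid indices.                                      *)
Record sSet := SSet {
  ssort :> Type;
  sdim : ssort -> nat;
  face : nat -> ssort -> ssort;
  degen : nat -> ssort -> ssort;
  sdim_face : forall i x, (0 < sdim x)%N -> (i <= sdim x)%N -> sdim (face i x) = (sdim x).-1;
  sdim_degen : forall i x, (i <= sdim x)%N -> sdim (degen i x) = (sdim x).+1;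
  face_face : forall n i j x, sdim x = n.+2 -> (i < j)%N -> (j <= n.+2)%N ->
    face i (face j x) = face j.-1 (face i x);
  face_degen_lt : forall n i j x, sdim x = n -> (i < j)%N -> (j <= n)%N ->
    face i (degen j x) = degen j.-1 (face i x);
  face_degen_eq : forall n j x, sdim x = n -> (j <= n)%N ->
    face j (degen j x) = x /\ face j.+1 (degen j x) = x;
  face_degen_gt : forall n i j x, sdim x = n -> (j.+1 < i)%N -> (i <= n.+1)%N ->
    face i (degen j x) = degen j (face i.-1 x);
  degen_degen : forall n i j x, sdim x = n -> (i <= j)%N -> (j <= n)%N ->
    degen i (degen j x) = degen j.+1 (degen i x)
}.

Record sGroup := SGroup {
  gset :> sSet;
  gmul : gset -> gset -> gset;
  gone : nat -> gset;
  ginv : gset -> gset;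
  sdim_gone : forall n, sdim (gone n) = n;
  sdim_gmul : forall x y, sdim x = sdim y -> sdim (gmul x y) = sdim x;
  sdim_ginv : forall x, sdim (ginv x) = sdim x;
  gmulA : forall x y z, sdim x = sdim y -> sdim y = sdim z ->
    gmul x (gmul y z) = gmul (gmul x y) z;
  gmul1 : forall x, gmul (gone (sdim x)) x = x /\ gmul x (gone (sdim x)) = x;
  gmulV : forall x, gmul (ginv x) x = gone (sdim x) /\ gmul x (ginv x) = gone (sdim x);
  face_gmul : forall i x y, sdim x = sdim y -> (0 < sdim x)%N -> (i <= sdim x)%N ->
    face i (gmul x y) = gmul (face i x) (face i y);
  degen_gmul : forall i x y, sdim x = sdim y -> (i <= sdim x)%N ->
    degen i (gmul x y) = gmul (degen i x) (degen i y)
}.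

Record sAction (G : sGroup) (X : sSet) := SAction {
  act :> G -> X -> X;
  sdim_act : forall g x, sdim g = sdim x -> sdim (act g x) = sdim x;
  act1 : forall x, act (gone G (sdim x)) x = x;
  actM : forall g h x, sdim g = sdim x -> sdim h = sdim x ->
    act (gmul g h) x = act g (act h x);
  face_act : forall i g x, sdim g = sdim x -> (0 < sdim x)%N -> (i <= sdim x)%N ->
    face i (act g x) = act (face i g) (face i x);
  degen_act : forall i g x, sdim g = sdim x -> (i <= sdim x)%N ->
    degen i (act g x) = act (degen i g) (degen i x)
}.

Definition is_loop (G : sGroup) (g : G) : Prop :=
  sdim g = 1%N /\ face 0 g = gone G 0 /\ face 1 g = gone G 0.

(* sexcl m n g = s_{[n] \ m} g = s_{i_r} o ... o s_{i_1} g, where            *)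
(*   {i_1 < ... < i_r} = [n] \ {m}; computed by recursion on n:             *)
Fixpoint sfull (X : sSet) (n : nat) (x : X) : X :=
  if n is n'.+1 then degen n' (sfull n' x) else x.

Fixpoint sexcl (X : sSet) (m n : nat) (x : X) : X :=
  if n is n'.+1 then
    (if m == n then sfull n x else degen n (sexcl m n' x))
  else x.

(* Normalized chains with integer coefficients.  A chain is a formal finite  *)
(* Z-linear combination of simplices; two chains are equal in the            *)
(* normalized chain complex iff they have the same coefficient on every      *)
(* non-degenerate simplex (degenerate simplices are zero).  Similarly        *)
(* C(X) (x) C(X) is free on pairs of non-degenerate simplices.              *)
Definition chain (T : Type) := seq (int * T).

Definition gen (T : Type) (x : T) : chain T := [:: (1, x)].

Definition scale (T : Type) (a : int) (c : chain T) : chain T :=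
  [seq (a * p.1, p.2) | p <- c].

Definition coef (T : Type) (c : chain T) (b : T) : int :=
  \sum_(p <- c) (if asbool (p.2 = b) then p.1 else 0).

Definition degenerate (X : sSet) (x : X) : Prop :=
  exists i (y : X), (i <= sdim y)%N /\ x = degen i y.

Definition ceq (X : sSet) (c c' : chain X) : Prop :=
  forall b : X, ~ degenerate b -> coef c b = coef c' b.

Definition teq (X : sSet) (c c' : chain (X * X)) : Prop :=
  forall b1 b2 : X, ~ degenerate b1 -> ~ degenerate b2 ->
    coef c (b1, b2) = coef c' (b1, b2).

Definition lin (T U : Type) (f : T -> chain U) (c : chain T) : chain U :=
  flatten [seq scale p.1 (f p.2) | p <- c].

Definition tens (T : Type) (c1 c2 : chain T) : chain (T * T) :=
  [seq (p.1 * q.1, (p.2, q.2)) | p <- c1, q <- c2].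

(* Tensor product of maps with the Koszul sign rule:
   (f (x) h)(x (x) y) = (-1)^(|h| |x|) f(x) (x) h(y), with |h| = degh. *)
Definition tmap (X : sSet) (f h : X -> chain X) (degh : nat)
    (t : chain (X * X)) : chain (X * X) :=
  lin (fun xy : X * X =>
         scale ((-1) ^+ (degh * sdim xy.1)) (tens (f xy.1) (h xy.2))) t.

Definition idc (X : sSet) : X -> chain X := @gen X.

Definition Aop (G : sGroup) (X : sSet) (a : sAction G X) (m : nat) (g : G)
    (sigma : X) : X :=
  a (sexcl m (sdim sigma) g) (degen m sigma).

Definition Amap (G : sGroup) (X : sSet) (a : sAction G X) (m : nat) (g : G) :
    X -> chain X := fun sigma => gen (Aop a m g sigma).

(* front face sigma(0,...,k) and back face sigma(k,...,n) *)
Definition front (X : sSet) (k : nat) (sigma : X) : X :=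
  iter (sdim sigma - k) (fun x => face (sdim x) x) sigma.
Definition back (X : sSet) (k : nat) (sigma : X) : X :=
  iter k (face 0) sigma.

Definition Pmap (X : sSet) (k : nat) (sigma : X) : chain (X * X) :=
  gen (front k sigma, back k sigma).

(* Main.v *)
Require Import Defs.
From mathcomp Require Import all_boot all_order all_algebra zify.
Set Implicit Arguments. Unset Strict Implicit.
Import GRing.Theory Num.Theory.
Local Open Scope nat_scope.

Lemma sdim_sfull (X : sSet) n (x : X) : sdim (sfull n x) = (sdim x + n)%N.
Proof.
elim: n => [|n IH] /=; first by rewrite addn0.
by rewrite sdim_degen IH ?addnS // leq_addl.
Qed.

Lemma sexcl_eq (X : sSet) m (x : X) : sexcl m m x = sfull m x.
Proof. by case: m => //= m; rewrite eqxx. Qed.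

Lemma sexcl_S (X : sSet) m n (x : X) : (m <= n)%N ->
  sexcl m n.+1 x = degen n.+1 (sexcl m n x).
Proof. by move=> h /=; rewrite ifN // neq_ltn ltnS h. Qed.

Lemma sdim_sexcl (X : sSet) m n (x : X) : sdim x = 1%N -> (m <= n)%N ->
  sdim (sexcl m n x) = n.+1.
Proof.
move=> hx; elim: n => [|n IH] hm.
  by move: hm; rewrite leqn0 => /eqP ->; rewrite /= hx.
rewrite leq_eqVlt in hm; case/orP: hm => [/eqP ->|hm].
  by rewrite sexcl_eq sdim_sfull hx add1n.
by rewrite sexcl_S // sdim_degen IH.
Qed.

Lemma sfull_face0 (X : sSet) m (x : X) : face 0 (sfull m.+1 x) = sfull m x.
Proof.
elim: m => [|m IH].
  by rewrite /= (face_degen_eq (j:=0) (erefl (sdim x)) (leq0n _)).1.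
rewrite [sfull m.+2 x]/= (face_degen_lt (erefl (sdim (sfull m.+1 x)))) //.
  by rewrite IH.
by rewrite sdim_sfull leq_addl.
Qed.

Lemma degen_gone (G : sGroup) i n : (i <= n)%N -> degen i (gone G n) = gone G n.+1.
Proof.
move=> hi.
set e := degen i (gone G n).
have de : sdim e = n.+1 by rewrite /e sdim_degen sdim_gone.
have ee : gmul e e = e.
  rewrite /e -degen_gmul ?sdim_gone //.
  by have := (gmul1 (gone G n)).1; rewrite sdim_gone => ->.
have [h1 _] := gmulV e.
have : gmul (ginv e) (gmul e e) = gmul (ginv e) e by rewrite ee.
rewrite gmulA ?sdim_ginv // h1 (gmul1 e).1 => H.
by rewrite {1}H de.
Qed.


Lemma sexcl_face0 (G : sGroup) (g : G) m n : sdim g = 1 -> m <= n ->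
  face 0 (sexcl m.+1 n.+1 g) = sexcl m n g.
Proof.
move=> hg; elim: n => [|n IH] hm.
  by move: hm; rewrite leqn0 => /eqP ->; rewrite sexcl_eq sfull_face0.
rewrite leq_eqVlt in hm; case/orP: hm => [/eqP ->|hm].
  by rewrite !sexcl_eq sfull_face0.
rewrite sexcl_S // (face_degen_lt (erefl (sdim (sexcl m.+1 n.+1 g)))) //.
  by rewrite IH // sexcl_S.
by rewrite sdim_sexcl.
Qed.

Lemma sexcl0_face0 (G : sGroup) (g : G) n : is_loop g ->
  face 0 (sexcl 0 n g) = gone G n.
Proof.
move=> [hg [h0 h1]]; elim: n => [|n IH] //.
rewrite sexcl_S // (face_degen_lt (erefl (sdim (sexcl 0 n g)))) //.
  by rewrite IH degen_gone.
by rewrite sdim_sexcl.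
Qed.

Lemma sexcl_faceL (G : sGroup) (g : G) m n : sdim g = 1 -> m <= n ->
  face n.+2 (sexcl m n.+1 g) = sexcl m n g.
Proof.
move=> hg hm; rewrite sexcl_S //.
exact: (face_degen_eq (sdim_sexcl hg hm) (leqnn _)).2.
Qed.

Lemma sfull_faceL (G : sGroup) (g : G) n : is_loop g ->
  face n.+1 (sfull n g) = gone G n.
Proof.
move=> [hg [h0 h1]]; elim: n => [|n IH] //.
rewrite /= (face_degen_gt (n := n.+1)) //.
  by rewrite IH degen_gone.
by rewrite sdim_sfull hg add1n.
Qed.

Lemma sexcl_faceL_n (G : sGroup) (g : G) n : is_loop g ->
  face n.+1 (sexcl n n g) = gone G n.
Proof. by move=> hg; rewrite sexcl_eq sfull_faceL. Qed.

Lemma sdim_Aop (G : sGroup) (X : sSet) (a : sAction G X) (g : G) m (s : X) :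
  sdim g = 1 -> m <= sdim s -> sdim (Aop a m g s) = (sdim s).+1.
Proof.
move=> hg hm; rewrite /Aop sdim_act sdim_degen //.
by rewrite sdim_sexcl // sdim_degen.
Qed.

Lemma Aop_face0 (G : sGroup) (X : sSet) (a : sAction G X) (g : G) m n (s : X) :
  sdim g = 1 -> sdim s = n.+1 -> m <= n ->
  face 0 (Aop a m.+1 g s) = Aop a m g (face 0 s).
Proof.
move=> hg hs hm; rewrite /Aop hs face_act ?sdim_degen ?hs ?sdim_sexcl //.
rewrite sexcl_face0 // (face_degen_lt hs) //= sdim_face ?hs //.
Qed.

Lemma Aop_face0_0 (G : sGroup) (X : sSet) (a : sAction G X) (g : G) (s : X) :
  is_loop g -> face 0 (Aop a 0 g s) = s.
Proof.
move=> hl; have [hg _] := hl.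
rewrite /Aop face_act ?sdim_degen ?sdim_sexcl //.
by rewrite sexcl0_face0 // (face_degen_eq (erefl _) (leq0n _)).1 act1.
Qed.

Lemma Aop_faceL (G : sGroup) (X : sSet) (a : sAction G X) (g : G) m n (s : X) :
  sdim g = 1 -> sdim s = n.+1 -> m <= n ->
  face n.+2 (Aop a m g s) = Aop a m g (face n.+1 s).
Proof.
move=> hg hs hm; rewrite /Aop hs face_act ?sdim_degen ?hs ?sdim_sexcl //;
  try by apply: leq_trans hm _.
rewrite sexcl_faceL // (face_degen_gt hs) //= sdim_face ?hs //.
Qed.

Lemma Aop_faceL_n (G : sGroup) (X : sSet) (a : sAction G X) (g : G) (s : X) :
  is_loop g -> face (sdim s).+1 (Aop a (sdim s) g s) = s.
Proof.
move=> hl; have [hg _] := hl.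
rewrite /Aop face_act ?sdim_degen ?sdim_sexcl //.
by rewrite sexcl_faceL_n // (face_degen_eq (erefl _) (leqnn _)).2 act1.
Qed.

Definition lastf (X : sSet) (x : X) : X := face (sdim x) x.

Lemma sdim_iterL (X : sSet) j (x : X) : j <= sdim x ->
  sdim (iter j (@lastf X) x) = sdim x - j.
Proof.
elim: j => [|j IH] hj; first by rewrite subn0.
rewrite iterS /lastf sdim_face IH ?subnS // ?(ltnW hj) //.
by rewrite subn_gt0.
Qed.

Lemma sdim_iter0 (X : sSet) j (x : X) : j <= sdim x ->
  sdim (iter j (face 0) x) = sdim x - j.
Proof.
elim: j => [|j IH] hj; first by rewrite subn0.
rewrite iterS sdim_face IH ?subnS // ?(ltnW hj) //.
by rewrite subn_gt0.
Qed.

Lemma iterL_Aop (G : sGroup) (X : sSet) (a : sAction G X) (g : G) m (s : X) j :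
  sdim g = 1 -> j <= sdim s - m ->
  iter j (@lastf X) (Aop a m g s) = Aop a m g (iter j (@lastf X) s).
Proof.
move=> hg; elim: j => [|j IH] hj //.
have hj' : j < sdim s - m := hj.
rewrite !iterS IH ?(ltnW hj) //.
have hd : sdim (iter j (@lastf X) s) = sdim s - j.
  by rewrite sdim_iterL // (leq_trans (ltnW hj')) // leq_subr.
have hpos : m < sdim s - j.
  by rewrite ltn_subRL addnC -ltn_subRL.
case E : (sdim s - j) hd hpos => [|p] // hd hpos.
move: hd; set t := iter j (@lastf X) s => hd.
clearbody t; rewrite /lastf sdim_Aop //; last by rewrite hd ltnW.
rewrite hd; exact: Aop_faceL.
Qed.

Lemma iterL_Aop_end (G : sGroup) (X : sSet) (a : sAction G X) (g : G) m (s : X) :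
  is_loop g -> m <= sdim s ->
  iter (sdim s - m).+1 (@lastf X) (Aop a m g s) = iter (sdim s - m) (@lastf X) s.
Proof.
move=> hl hm; have [hg _] := hl.
rewrite iterS iterL_Aop //.
have hd : sdim (iter (sdim s - m) (@lastf X) s) = m.
  by rewrite sdim_iterL ?leq_subr // subKn.
move: hd; set t := iter _ (@lastf X) s => hd; clearbody t; subst m.
rewrite /lastf sdim_Aop //.
exact: Aop_faceL_n.
Qed.

Lemma back_Aop_le (G : sGroup) (X : sSet) (a : sAction G X) (g : G) m (s : X) k :
  sdim g = 1 -> k <= m -> m <= sdim s ->
  iter k (face 0) (Aop a m g s) = Aop a (m - k) g (iter k (face 0) s).
Proof.
move=> hg; elim: k => [|k IH] hk hm; first by rewrite subn0.
rewrite !iterS IH ?(ltnW hk) //.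
have hd : sdim (iter k (face 0) s) = sdim s - k.
  by rewrite sdim_iter0 // (leq_trans (ltnW hk)).
have -> : m - k = (m - k.+1).+1 by rewrite subnS prednK // subn_gt0.
have hs : sdim s - k = (sdim s - k.+1).+1.
  by rewrite subnS prednK // subn_gt0 (leq_trans hk).
rewrite hs in hd.
apply: (@Aop_face0 _ _ _ _ _ (sdim s - k.+1)) => //.
by rewrite leq_sub2r.
Qed.

Lemma back_Aop_gt (G : sGroup) (X : sSet) (a : sAction G X) (g : G) m (s : X) k :
  is_loop g -> m < k -> m <= sdim s ->
  iter k (face 0) (Aop a m g s) = iter k.-1 (face 0) s.
Proof.
move=> hl hk hm; have [hg _] := hl.
have -> : k = (k - m.+1) + m.+1 by rewrite subnK.
rewrite iterD iterS back_Aop_le // subnn Aop_face0_0 // -iterD addnS.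
by [].
Qed.
Local Open Scope ring_scope.
Theorem lemma8p1 (G : sGroup) (X : sSet) (a : sAction G X) (g : G)
    (hg : is_loop g) (n : nat) (sigma : X) (hsigma : sdim sigma = n)
    (m k : nat) (hm : (m <= n)%N) (hk : (k <= n.+1)%N) :
  teq (lin (@Pmap X k) (lin (Amap a m g) (gen sigma)))
      (if (k <= m)%N then
         scale ((-1) ^+ k)
           ((tmap (@idc X) (Amap a (m - k) g) 1) (lin (@Pmap X k) (gen sigma)))
       else
         tmap (Amap a m g) (@idc X) 0 (lin (@Pmap X k.-1) (gen sigma))).
Proof.
have hg1 : sdim g = 1%N by case: hg.
move=> b1 b2 _ _; congr coef.
rewrite /lin /Pmap /Amap /gen /scale /tmap /tens /idc /front /back /=.
have hA : sdim (Aop a m g sigma) = n.+1 by rewrite sdim_Aop // hsigma.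
rewrite hA.
change (fun x : X => face (sdim x) x) with (@lastf X).
case: ifP => hkm.
  have e1 : iter (n.+1 - k) (@lastf X) (Aop a m g sigma) =
            iter (sdim sigma - k) (@lastf X) sigma.
    have -> : (n.+1 - k = (m - k) + (n - m).+1)%N by lia.
    rewrite iterD -hsigma iterL_Aop_end ?hsigma // -iterD.
    by congr iter; lia.
  have e2 := @back_Aop_le _ _ a g m sigma k hg1 hkm (leq_trans hm (eq_leq (esym hsigma))).
  have e3 : sdim (iter (sdim sigma - k) (@lastf X) sigma) = k.
    by rewrite sdim_iterL ?leq_subr // subKn // hsigma (leq_trans hkm).
  rewrite e1 e2 e3 !mul1r mulr1 mul1n -exprD addnn -mul2n exprM sqrrN !expr1n.
  by [].
rewrite /lin /=.
have hk0 : (0 < k)%N by case: k hk hkm {hsigma} => //; rewrite leq0n.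
have e1 : iter (n.+1 - k) (@lastf X) (Aop a m g sigma) =
          Aop a m g (iter (sdim sigma - k.-1) (@lastf X) sigma).
  rewrite iterL_Aop // hsigma.
    by congr (Aop _ _ _ (iter _ _ _)); lia.
  move: hkm => /negbT; rewrite -ltnNge => hkm. lia.
move: hkm => /negbT; rewrite -ltnNge => hkm.
have e2 := @back_Aop_gt _ _ a g m sigma k hg hkm (leq_trans hm (eq_leq (esym hsigma))).
rewrite e1 e2.
by rewrite !mul1r.
Qed.
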